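(* Let $f=f_1\wedge\dots\wedge f_r\in\wedge^rS_m$, let $w=(w_0,\dots,w_n)\in\mathbb Z^{n+1}$ be a weight vector with $w_0>w_1>\dots>w_n$ which distinguishes monomials in degree $rm$, and for $t\neq0$ let $\lambda(t)$ be the diagonal matrix with diagonal entries $t^{-w_0},\dots,t^{-w_n}$. Let $h\in\mathrm{GL}(n+1,K)$ be upper-triangular and let $g\in U(f)$. Then for every integer $N$, $$\operatorname{supp}\big(h\cdot(\lambda(t)gf)_{\ge N}\big)=\operatorname{supp}\big((\lambda(t)gf)_{\ge N}\big)$$ for all but finitely many $t\in K\setminus\{0\}$.
   Context: $K$ algebraically closed of characteristic $0$, $S=K[x_0,\dots,x_n]$, $S_m$ its degree-$m$ part; $g=(a_{ij})\in\mathrm{GL}(n+1,K)$ acts on $S$ by $x_i\mapsto\sum_ja_{ji}x_j$, and on $\wedge^rS_m$ by $g(f_1\wedge\dots\wedge f_r)=gf_1\wedge\dots\wedge gf_r$. A state is a wedge product $\mathbf x^{B_1}\wedge\dots\wedge\mathbf x^{B_r}$ of $r$ pairwise distinct degree-$m$ monomials; two states are equivalent if they differ by a reordering (hence by a sign). Every $F\in\wedge^rS_m$ is uniquely a linear combination of states (one representative per equivalence class); $\operatorname{supp}(F)$ is the set of states occurring with nonzero coefficient. The weight of the state (and of the corresponding term) is $w\cdot(B_1+\dots+B_r)$. For an integer $N$, $F_{\ge N}$ is the sum of the terms of $F$ of weight $\ge N$. A weight vector $w$ distinguishes monomials in degree $d$ if $w\cdot A\neq w\cdot B$ for all distinct $A,B\in\mathbb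 N^{n+1}$ of degree $d$. $U(f)$: let $G$ be the $(n+1)\times(n+1)$ matrix of indeterminates $G_{ij}$ and expand $Gf$ as a linear combination of states with coefficients polynomials in the $G_{ij}$; $U(f)\subseteq\mathrm{GL}(n+1,K)$ is the open set where none of those coefficient polynomials that are not identically zero vanish. *)

(* Defs.v *)
From HB Require Import structures.
From mathcomp Require Import all_boot all_order all_algebra.
From mathcomp Require Import mpoly.
Import GRing.Theory.
Local Open Scope ring_scope.

(* Polynomial ring S = K[x_0,...,x_n] is {mpoly K[n.+1]}; variable x_i is 'X_i. *)

Definition mon (n m : nat) :=
  {A : {ffun 'I_n.+1 -> 'I_m.+1} | (\sum_i (A i : nat) == m)%N}.

Definition mnm_of {n m : nat} (A : mon n m) : 'X_{1..n.+1} :=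
  [multinom (val A i : nat) | i < n.+1].

(* A state = an equivalence class of wedges of r pairwise distinct degree-m
   monomials, i.e. an r-element set of such monomials. *)
Definition state (n m r : nat) := {S : {set mon n m} | #|S| == r}.

Definition st_mon {n m r : nat} (S : state n m r) (j : 'I_r) : mon n m :=
  enum_val (cast_ord (esym (eqP (valP S))) j).

(* An element of wedge^r S_m (with coefficients in R) is encoded by its
   coefficients on states, each state being represented by the wedge of its
   monomials in the order given by st_mon. *)
Definition ext (R : Type) (n m r : nat) := state n m r -> R.

(* Coefficients of f_1 /\ ... /\ f_r (f_i in S_m): expanding by multilinearity,
   the coefficient on the state S is the r x r minor det(coef of x^{S_j} in f_i). *)
Definition wedge {R : comNzRingType} {n : nat} (m : nat) {r : nat} (f : 'I_r -> {mpoly R[n.+1]})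
  : ext R n m r :=
  fun S => \det (\matrix_(i < r, j < r) (f i)@_(mnm_of (st_mon S j))).

Definition act {R : comNzRingType} {n : nat} (g : 'M[R]_n.+1)
  (p : {mpoly R[n.+1]}) : {mpoly R[n.+1]} :=
  comp_mpoly [tuple \sum_(j < n.+1) g j i *: 'X_j | i < n.+1] p.

(* Linear action on wedge^r S_m: g(e_S) = g x^{S_1} /\ ... /\ g x^{S_r}. *)
Definition act_ext {R : comNzRingType} {n m r : nat} (g : 'M[R]_n.+1)
  (F : ext R n m r) : ext R n m r :=
  fun C => \sum_(S : state n m r)
     F S * wedge m (fun i => act g 'X_[mnm_of (st_mon S i)]) C.

Definition mwt {n : nat} (w : 'I_n.+1 -> int) (A : 'X_{1..n.+1}) : int :=
  \sum_i w i * (A i)%:Z.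

Definition swt {n m r : nat} (w : 'I_n.+1 -> int) (S : state n m r) : int :=
  \sum_(B in val S) mwt w (mnm_of B).

Definition trunc {R : nzRingType} {n m r : nat} (w : 'I_n.+1 -> int) (N : int)
  (F : ext R n m r) : ext R n m r :=
  fun S => if N <= swt w S then F S else 0.

Definition supp {R : nzRingType} {n m r : nat} (F : ext R n m r)
  : {set state n m r} := [set S | F S != 0].

Definition distinguishes {n : nat} (w : 'I_n.+1 -> int) (d : nat) : Prop :=
  forall A B : 'X_{1..n.+1}, mdeg A = d -> mdeg B = d -> A != B ->
    mwt w A != mwt w B.

Definition lam {K : fieldType} {n : nat} (w : 'I_n.+1 -> int) (t : K)
  : 'M[K]_n.+1 := diag_mx (\row_i t ^ (- w i)).

(* The generic matrix G = (G_ij) of indeterminates, in the polynomial ring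
   K[G_ij] = {mpoly K[(n+1)*(n+1)]}, G_ij being the variable mxvec_index i j. *)
Definition genmx (K : fieldType) (n : nat)
  : 'M[{mpoly K[(n.+1 * n.+1)%N]}]_n.+1 :=
  \matrix_(i, j) 'X_(mxvec_index i j).

Definition coefpoly {K : fieldType} {n : nat} (m : nat) {r : nat} (f : 'I_r -> {mpoly K[n.+1]})
  : ext {mpoly K[(n.+1 * n.+1)%N]} n m r :=
  wedge m (fun i => act (genmx K n) (map_mpoly (fun c : K => c%:MP) (f i))).

Definition inU {K : fieldType} {n : nat} (m : nat) {r : nat} (f : 'I_r -> {mpoly K[n.+1]})
  (g : 'M[K]_n.+1) : Prop :=
  g \in unitmx /\
  forall S : state n m r, coefpoly m f S != 0 ->
    (coefpoly m f S).@[fun k => mxvec g 0 k] != 0.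

(* Main.v *)
Require Import Defs.
From HB Require Import structures.
From mathcomp Require Import all_boot all_order all_algebra.
From mathcomp Require Import mpoly.
From mathcomp Require Import fingroup perm.
Import Order.TTheory GRing.Theory Num.Theory.
Local Open Scope ring_scope.

Section CB.
Variables (R : comNzRingType) (T : finType) (r : nat).
Definition stT := {S : {set T} | #|S| == r}.
Definition est (S : stT) (j : 'I_r) : T :=
  enum_val (cast_ord (esym (eqP (valP S))) j).

Lemma est_in (S : stT) j : est S j \in val S.
Proof. exact: enum_valP. Qed.

Lemma est_inj (S : stT) : injective (est S).
Proof. by move=> i j /enum_val_inj /cast_ord_inj. Qed.

Lemma est_surj {S : stT} {x} : x \in val S -> exists j, est S j = x.
Proof.
move=> Hx; exists (cast_ord (eqP (valP S)) (enum_rank_in Hx x)).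
by rewrite /est cast_ordK enum_rankK_in.
Qed.

Lemma CB_step1 (A : 'I_r -> T -> R) (B : T -> 'I_r -> R) :
  \det (\matrix_(i, j) \sum_x A i x * B x j) =
  \sum_(phi : {ffun 'I_r -> T})
     (\prod_i A i (phi i)) * \det (\matrix_(i, j) B (phi i) j).
Proof.
rewrite /determinant.
have E1 : forall s : 'S_r, (-1) ^+ s * \prod_i (\matrix_(i, j) \sum_x A i x * B x j) i (s i)
   = \sum_(phi : {ffun 'I_r -> T}) (-1) ^+ s * \prod_i (A i (phi i) * B (phi i) (s i)).
  move=> s; rewrite -mulr_sumr; congr (_ * _).
  rewrite (eq_bigr (fun i => \sum_x A i x * B x (s i))); last by move=> i _; rewrite mxE.
  by rewrite bigA_distr_bigA.
rewrite (eq_bigr _ (fun s _ => E1 s)).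
rewrite exchange_big /=; apply: eq_bigr => phi _.
rewrite mulr_sumr; apply: eq_bigr => s _.
rewrite big_split /= mulrCA; congr (_ * (_ * _)).
by apply: eq_bigr => i _; rewrite mxE.
Qed.

Definition Psi (p : stT * 'S_r) : {ffun 'I_r -> T} :=
  [ffun i => est p.1 (p.2 i)].

Lemma Psi_inj : injective Psi.
Proof.
move=> [S s] [S' s'] /= E.
have ES : S = S'.
  apply/val_inj/setP => x; apply/idP/idP => Hx.
  - have [j <-] := est_surj Hx.
    have := congr1 (fun f : {ffun 'I_r -> T} => f ((s^-1)%g j)) E.
    rewrite !ffunE /= permKV => ->; exact: est_in.
  - have [j <-] := est_surj Hx.
    have := congr1 (fun f : {ffun 'I_r -> T} => f ((s'^-1)%g j)) E.
    rewrite !ffunE /= permKV => <-; exact: est_in.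
subst S'; congr (_, _); apply/permP => i.
have := congr1 (fun f : {ffun 'I_r -> T} => f i) E.
by rewrite !ffunE /= => /est_inj.
Qed.

Lemma inj_in_Psi (phi : {ffun 'I_r -> T}) : injective phi ->
  phi \in [set Psi p | p in predT].
Proof.
move=> phiI.
have cS : #|[set phi i | i in 'I_r]| == r by rewrite card_imset // card_ord.
pose S : stT := exist (fun X : {set T} => #|X| == r) _ cS.
have Hi : forall i, phi i \in val S by move=> i; apply: imset_f.
pose s i := cast_ord (eqP (valP S)) (enum_rank_in (Hi i) (phi i)).
have Es : forall i, est S (s i) = phi i.
  by move=> i; rewrite /est /s cast_ordK enum_rankK_in.
have sI : injective s by move=> i j E; apply: phiI; rewrite -Es E Es.
apply/imsetP; exists (S, perm sI) => //.
by apply/ffunP => i; rewrite ffunE /= permE Es.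
Qed.

Lemma CB (A : 'I_r -> T -> R) (B : T -> 'I_r -> R) :
  \det (\matrix_(i, j) \sum_x A i x * B x j) =
  \sum_(S : stT) \det (\matrix_(i, j) A i (est S j)) *
                  \det (\matrix_(i, j) B (est S i) j).
Proof.
rewrite CB_step1.
pose H (phi : {ffun 'I_r -> T}) :=
  (\prod_i A i (phi i)) * \det (\matrix_(i, j) B (phi i) j).
rewrite (bigID (fun phi => phi \in [set Psi p | p in predT])) /=.
rewrite [X in _ + X]big1 ?addr0; last first.
  move=> phi Hphi.
  have: ~ injective phi by move=> /inj_in_Psi; rewrite (negbTE Hphi).
  move=> nI.
  case: (boolP [exists i, exists j, (i != j) && (phi i == phi j)]);
    last first.
    move=> Hn; exfalso; apply: nI => i j E; apply/eqP; apply: contraT => ij.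
    by move/existsPn: Hn => /(_ i)/existsPn/(_ j); rewrite ij E eqxx.
  move=> /existsP[i /existsP[j /andP[ij /eqP Eij]]].
  by rewrite (determinant_alternate ij) ?mulr0 // => k; rewrite !mxE Eij.
rewrite (big_imset H (h := Psi)) /=; last by move=> p q _ _; apply: Psi_inj.
transitivity (\sum_(S : stT) \sum_(s : 'S_r) H (Psi (S, s))).
  by rewrite pair_big; apply: eq_bigl => p; rewrite ?in_setT.
apply: eq_big => // S _; rewrite [X in _ = X * _]/determinant mulr_suml.
apply: eq_bigr => s _; rewrite /H.
have -> : \matrix_(i, j) B (Psi (S, s) i) j =
          row_perm s (\matrix_(i, j) B (est S i) j).
  by apply/matrixP => i j; rewrite !mxE ffunE.
rewrite row_permE det_mulmx det_perm mulrCA mulrA; congr (_ * _).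
congr (_ * _); apply: eq_bigr => i _.
by rewrite !mxE ffunE.
Qed.
End CB.


Section Act.
Variables (R : comNzRingType) (n : nat).
Implicit Types (M : 'M[R]_n.+1) (p q : {mpoly R[n.+1]}).

Definition lin M (i : 'I_n.+1) : {mpoly R[n.+1]} := \sum_(j < n.+1) M j i *: 'X_j.



Lemma actX M A : act M 'X_[A] = \prod_i (lin M i) ^+ A i.
Proof. by rewrite /act comp_mpolyX; apply: eq_bigr => i _; rewrite tnth_mktuple. Qed.

Lemma actXU M j : act M 'X_j = lin M j.
Proof. by rewrite /act comp_mpolyXU -(tnth_nth 0) tnth_mktuple. Qed.

Lemma act_sumE M p : act M p = \sum_(A <- msupp p) p@_A *: act M 'X_[A].
Proof. by rewrite /act comp_mpolyEX. Qed.

Lemma actD M : {morph act M : x y / x + y}.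
Proof. by move=> x y; rewrite /act raddfD. Qed.
Lemma actZ M c p : act M (c *: p) = c *: act M p.
Proof. by rewrite /act linearZ. Qed.
Lemma act_sum M (I : Type) (s : seq I) (P : pred I) (F : I -> {mpoly R[n.+1]}) :
  act M (\sum_(i <- s | P i) F i) = \sum_(i <- s | P i) act M (F i).
Proof. by rewrite /act raddf_sum. Qed.
Lemma actM M : {morph act M : x y / x * y}.
Proof. by move=> x y; rewrite /act rmorphM. Qed.
Lemma act_prod M (I : Type) (s : seq I) (P : pred I) (F : I -> {mpoly R[n.+1]}) :
  act M (\prod_(i <- s | P i) F i) = \prod_(i <- s | P i) act M (F i).
Proof. by rewrite /act rmorph_prod. Qed.
Lemma actXn M p k : act M (p ^+ k) = (act M p) ^+ k.
Proof. by rewrite /act rmorphXn. Qed.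

Lemma act_lin A B i : act A (lin B i) = lin (A *m B) i.
Proof.
rewrite /lin act_sum.
under eq_bigr => j _ do rewrite actZ actXU /lin scaler_sumr.
rewrite exchange_big /=; apply: eq_bigr => l _.
rewrite mxE scaler_suml; apply: eq_bigr => j _.
by rewrite scalerA mulrC.
Qed.

Lemma act_comp A B p : act A (act B p) = act (A *m B) p.
Proof.
rewrite (act_sumE B) act_sum (act_sumE (A *m B)); apply: eq_bigr => D _.
rewrite actZ !actX act_prod; congr (_ *: _); apply: eq_bigr => i _.
by rewrite actXn act_lin.
Qed.


Lemma lin_homog M i : lin M i \is 1.-homog.
Proof.
apply: rpred_sum => j _; apply: dhomogZ; rewrite dhomogX; apply/eqP; exact: mdeg1.
Qed.

Lemma actX_homog M A : act M 'X_[A] \is (mdeg A).-homog.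
Proof.
rewrite actX mdegE.
apply: (big_ind2 (fun (x : {mpoly R[n.+1]}) (d : nat) => x \is d.-homog)).
- exact: dhomog1.
- by move=> x1 x2 y1 y2 h1 h2; apply: dhomogM.
- by move=> i _; have := dhomogMn (A i) (lin_homog M i); rewrite mul1n.
Qed.

Lemma act_homog M p d : p \is d.-homog -> act M p \is d.-homog.
Proof.
move=> hp; rewrite act_sumE big_seq; apply: rpred_sum => A HA; apply: dhomogZ.
rewrite -(dhomog_mf hp HA); exact: actX_homog.
Qed.

End Act.
Arguments lin {R n}.

Lemma map_act (R S : comNzRingType) n (phi : {rmorphism R -> S}) (M : 'M[R]_n.+1)
  (p : {mpoly R[n.+1]}) :
  map_mpoly phi (act M p) = act (map_mx phi M) (map_mpoly phi p).
Proof.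
rewrite act_sumE raddf_sum [in RHS](mpolyE p) raddf_sum act_sum.
apply: eq_bigr => A _ /=; rewrite !map_mpolyZ map_mpolyX actZ; congr (_ *: _).
rewrite !actX rmorph_prod; apply: eq_bigr => i _; rewrite rmorphXn.
congr (_ ^+ _); rewrite /lin raddf_sum; apply: eq_bigr => j _ /=.
by rewrite map_mpolyZ map_mpolyX mxE.
Qed.

Lemma wedge_eval (K : fieldType) n m r (f : 'I_r -> {mpoly K[n.+1]})
  (M : 'M[K]_n.+1) S :
  (coefpoly m f S).@[fun k => mxvec M 0 k] = wedge m (fun i => act M (f i)) S.
Proof.
rewrite /coefpoly /wedge -det_map_mx; congr (\det _); apply/matrixP => i j.
rewrite !mxE -mcoeff_map_mpoly map_act.
have -> : map_mx (meval (fun k => mxvec M 0 k)) (Defs.genmx K n) = M.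
  apply/matrixP => a b; rewrite !mxE mevalXU; exact: mxvecE.
congr (mcoeff _ (act _ _)).
apply/mpolyP => D.
have -> : map_mpoly (fun c : K => c%:MP) (f i) =
          map_mpoly (@mpolyC (n.+1 * n.+1)%N K) (f i) by [].
by rewrite !mcoeff_map_mpoly /= mevalC.
Qed.


Section Mon.
Variables (n m : nat).

Lemma mnm_ofE (B : mon n m) i : mnm_of B i = val B i.
Proof. by rewrite /mnm_of mnmE. Qed.

Lemma mnm_of_inj : injective (@mnm_of n m).
Proof.
move=> B B' /mnmP E; apply/val_inj/ffunP => i; apply/val_inj.
by have := E i; rewrite !mnm_ofE.
Qed.

Lemma mdeg_mnm_of (B : mon n m) : mdeg (mnm_of B) = m.
Proof.
rewrite mdegE; under eq_bigr do rewrite mnm_ofE; exact/eqP/(valP B).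
Qed.

Lemma mnm_of_surj (A : 'X_{1..n.+1}) : mdeg A = m -> exists B : mon n m, mnm_of B = A.
Proof.
move=> dA.
have Hi : forall i, (A i < m.+1)%N.
  move=> i; rewrite ltnS -dA mdegE (bigD1 i) //=; exact: leq_addr.
pose f : {ffun 'I_n.+1 -> 'I_m.+1} := [ffun i => Ordinal (Hi i)].
have Hs : (\sum_i (f i : nat) == m)%N.
  apply/eqP; under eq_bigr do rewrite ffunE /=; by rewrite -mdegE.
exists (exist _ f Hs); apply/mnmP => i; by rewrite mnm_ofE /= ffunE.
Qed.

End Mon.

Lemma act_coef (R : comNzRingType) n m (M : 'M[R]_n.+1) (q : {mpoly R[n.+1]}) D :
  q \is m.-homog ->
  (act M q)@_D = \sum_(B : mon n m) q@_(mnm_of B) * (act M 'X_[mnm_of B])@_D.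
Proof.
move=> hq; rewrite {1}act_sumE raddf_sum /=.
under eq_bigr do rewrite mcoeffZ.
symmetry; rewrite (bigID (fun B : mon n m => mnm_of B \in msupp q)) /=.
rewrite [X in _ + X]big1 ?addr0; last first.
  by move=> B HB; move: HB; rewrite -mcoeff_eq0 => /eqP ->; rewrite mul0r.
rewrite -big_filter.
rewrite -(big_map (@mnm_of n m) xpredT (fun A => q@_A * (act M 'X_[A])@_D)).
apply: perm_big; apply: uniq_perm.
- rewrite map_inj_uniq ?filter_uniq ?index_enum_uniq //; exact: mnm_of_inj.
- exact: msupp_uniq.
move=> A; apply/mapP/idP.
  by case=> B; rewrite mem_filter => /andP[HB _] ->.
move=> HA; have [B EB] := @mnm_of_surj n m A (dhomog_mf hq HA).
by exists B => //; rewrite mem_filter EB HA mem_index_enum.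
Qed.

Lemma wedge_act (R : comNzRingType) n m r (M : 'M[R]_n.+1)
  (p : 'I_r -> {mpoly R[n.+1]}) C :
  (forall i, p i \is m.-homog) ->
  act_ext M (wedge m p) C = wedge m (fun i => act M (p i)) C.
Proof.
move=> hp; rewrite /act_ext [in RHS]/wedge.
have -> : \matrix_(i, j) (act M (p i))@_(mnm_of (st_mon C j)) =
   \matrix_(i, j) \sum_(B : mon n m) (p i)@_(mnm_of B) *
       (act M 'X_[mnm_of B])@_(mnm_of (st_mon C j)).
  by apply/matrixP => i j; rewrite !mxE (@act_coef R n m M (p i) _ (hp i)).
rewrite (@CB R (mon n m) r (fun i B => (p i)@_(mnm_of B))
            (fun B j => (act M 'X_[mnm_of B])@_(mnm_of (st_mon C j)))).
by [].
Qed.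


Lemma sum_indic (T : eqType) (R : nzRingType) (s : seq T) (F : T -> R) x :
  uniq s -> \sum_(a <- s) F a * (a == x)%:R = if x \in s then F x else 0.
Proof.
elim: s => [|a s IH]; first by rewrite big_nil.
rewrite /= => /andP[nas us]; rewrite big_cons IH // in_cons.
have [<-|ax] := eqVneq a x; last by rewrite mulr0 add0r.
by rewrite (negbTE nas) mulr1 addr0.
Qed.

Lemma swt_est n m r (w : 'I_n.+1 -> int) (S : state n m r) :
  swt w S = \sum_(j < r) mwt w (mnm_of (st_mon S j)).
Proof.
rewrite /swt.
have -> : val S = [set st_mon S j | j in 'I_r].
  apply/setP => x; apply/idP/imsetP.
  - by move=> /est_surj [j <-]; exists j.
  - by case=> j _ ->; apply: est_in.
by rewrite big_imset //; move=> i j _ _; apply: est_inj.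
Qed.

Section Lam.
Variables (K : fieldType) (n : nat) (w : 'I_n.+1 -> int) (t : K).
Hypothesis t0 : t != 0.

Lemma expz_sum (I : Type) (s : seq I) (F : I -> int) :
  \prod_(i <- s) t ^ F i = t ^ (\sum_(i <- s) F i).
Proof.
elim: s => [|a s IH]; first by rewrite !big_nil expr0z.
by rewrite !big_cons IH expfzDr.
Qed.

Lemma lin_lam i : lin (lam w t) i = t ^ (- w i) *: 'X_i.
Proof.
rewrite /lin (bigD1 i) //= big1 ?addr0; first by rewrite /lam mxE !mxE eqxx mulr1n.
by move=> j ji; rewrite /lam mxE (negbTE ji) mulr0n scale0r.
Qed.

Lemma act_lamX A : act (lam w t) 'X_[A] = t ^ (- mwt w A) *: 'X_[A].
Proof.
rewrite actX; under eq_bigr do rewrite lin_lam exprZn.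
rewrite scaler_prod -mpolyXE_id; congr (_ *: _).
rewrite /mwt -sumrN -expz_sum; apply: eq_bigr => i _.
have -> : (t ^ (- w i)) ^+ A i = (t ^ (- w i)) ^ (A i)%:Z by [].
by rewrite exprz_exp mulNr.
Qed.

Lemma act_lam_coef (q : {mpoly K[n.+1]}) D :
  (act (lam w t) q)@_D = t ^ (- mwt w D) * q@_D.
Proof.
rewrite act_sumE raddf_sum /=.
under eq_bigr do rewrite act_lamX scalerA mcoeffZ mcoeffX.
rewrite (@sum_indic _ _ _ (fun A => q@_A * t ^ (- mwt w A))) ?msupp_uniq //.
case: ifP => HD; first by rewrite mulrC.
by move/negbT: HD; rewrite -mcoeff_eq0 => /eqP ->; rewrite mulr0.
Qed.

Lemma wedge_lam m r (q : 'I_r -> {mpoly K[n.+1]}) S :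
  wedge m (fun i => act (lam w t) (q i)) S = t ^ (- swt w S) * wedge m q S.
Proof.
rewrite /wedge.
have -> : \matrix_(i, j) (act (lam w t) (q i))@_(mnm_of (st_mon S j)) =
  (\matrix_(i, j) (q i)@_(mnm_of (st_mon S j))) *m
     diag_mx (\row_j t ^ (- mwt w (mnm_of (st_mon S j)))).
  by rewrite mul_mx_diag; apply/matrixP => i j; rewrite !mxE act_lam_coef mulrC.
rewrite det_mulmx det_diag mulrC; congr (_ * _).
rewrite swt_est -sumrN -expz_sum; apply: eq_bigr => j _; by rewrite mxE.
Qed.

End Lam.


Section Weight.
Variables (K : fieldType) (n : nat) (w : 'I_n.+1 -> int).
Implicit Types (p q e : {mpoly K[n.+1]}) (A B D : 'X_{1..n.+1}).

Lemma mwtD A B : mwt w (A + B)%MM = mwt w A + mwt w B.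
Proof.
rewrite /mwt -big_split; apply: eq_bigr => i _.
by rewrite mnmDE PoszD mulrDr.
Qed.

Lemma mwt0 : mwt w 0%MM = 0.
Proof. by rewrite /mwt big1 // => i _; rewrite mnm0E mulr0. Qed.

Lemma mwtU j : mwt w U_(j)%MM = w j.
Proof.
rewrite /mwt (bigD1 j) //= big1 ?addr0; first by rewrite mnm1E eqxx mulr1.
by move=> i ij; rewrite mnm1E eq_sym (negbTE ij) mulr0.
Qed.

Definition hi k q := forall D, D \in msupp q -> k < mwt w D.
Definition ge k q := forall D, D \in msupp q -> k <= mwt w D.

Lemma hi0 k : hi k 0.
Proof. by move=> D; rewrite msupp0. Qed.

Lemma hiD k p q : hi k p -> hi k q -> hi k (p + q).
Proof. by move=> hp hq D /msuppD_le; rewrite mem_cat => /orP[/hp|/hq]. Qed.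

Lemma hiZ k c q : hi k q -> hi k (c *: q).
Proof. by move=> hq D /msuppZ_le /hq. Qed.

Lemma geD k p q : ge k p -> ge k q -> ge k (p + q).
Proof. by move=> hp hq D /msuppD_le; rewrite mem_cat => /orP[/hp|/hq]. Qed.

Lemma hi_ge k q : hi k q -> ge k q.
Proof. by move=> hq D /hq /ltW. Qed.

Lemma geZX c A : ge (mwt w A) (c *: 'X_[A]).
Proof. by move=> D /msuppZ_le; rewrite msuppX inE => /eqP ->. Qed.

Lemma hi_mul_ge {k1 k2 p q} : ge k1 p -> hi k2 q -> hi (k1 + k2) (p * q).
Proof.
move=> hp hq D /msuppM_le /allpairsP [[m1 m2] [/= H1 H2 ->]].
rewrite mwtD; exact: ler_ltD (hp _ H1) (hq _ H2).
Qed.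

Lemma hi_mul_le {k1 k2 p q} : hi k1 p -> ge k2 q -> hi (k1 + k2) (p * q).
Proof.
move=> hp hq D /msuppM_le /allpairsP [[m1 m2] [/= H1 H2 ->]].
rewrite mwtD; exact: ltr_leD (hp _ H1) (hq _ H2).
Qed.

Definition LT A c q := exists e, q = c *: 'X_[A] + e /\ hi (mwt w A) e.

Lemma LT_ge {A c q} : LT A c q -> ge (mwt w A) q.
Proof. by case=> e [-> he]; apply: geD; [apply: geZX | apply: hi_ge]. Qed.

Lemma LT1 : LT 0%MM 1 1.
Proof. by exists 0; rewrite addr0 scale1r mpolyX0; split=> //; apply: hi0. Qed.

Lemma LTM {A B c d p q} : LT A c p -> LT B d q -> LT (A + B)%MM (c * d) (p * q).
Proof.
move=> hp hq; have gq := LT_ge hq.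
case: hp => e [-> he]; case: hq => e' [Eq he'].
exists (c *: 'X_[A] * e' + e * q); split.
  rewrite Eq mulrDl mulrDr addrA; congr (_ + _ + _).
  by rewrite mpolyXD -scalerAl -scalerAr scalerA.
rewrite mwtD; apply: hiD; first exact: hi_mul_ge (geZX _ _) he'.
exact: hi_mul_le he gq.
Qed.

Lemma LTX {A c p} k : LT A c p -> LT (A *+ k)%MM (c ^+ k) (p ^+ k).
Proof.
move=> hp; elim: k => [|k IH]; first by rewrite mulm0n !expr0; apply: LT1.
by rewrite mulmS !exprS; apply: LTM.
Qed.

Lemma LT_prod (I : Type) (s : seq I) (B : I -> 'X_{1..n.+1}) (c : I -> K)
  (p : I -> {mpoly K[n.+1]}) :
  (forall i, LT (B i) (c i) (p i)) ->
  LT (\sum_(i <- s) B i)%MM (\prod_(i <- s) c i) (\prod_(i <- s) p i).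
Proof.
move=> hB; elim: s => [|a s IH]; first by rewrite !big_nil; apply: LT1.
by rewrite !big_cons; apply: LTM.
Qed.

Variable (h : 'M[K]_n.+1).
Hypothesis hw : forall i j : 'I_n.+1, (i < j)%N -> w j < w i.
Hypothesis hup : forall i j : 'I_n.+1, (j < i)%N -> h i j = 0.

Lemma LT_lin i : LT U_(i)%MM (h i i) (lin h i).
Proof.
exists (\sum_(j | j != i) h j i *: 'X_j); split.
  by rewrite /lin (bigD1 i).
apply: (big_ind (hi (mwt w U_(i)%MM))); [exact: hi0 | exact: hiD |].
move=> j ji; have [hz|hnz] := eqVneq (h j i) 0.
  by rewrite hz scale0r; apply: hi0.
move=> D /msuppZ_le; rewrite msuppX inE => /eqP ->.
rewrite !mwtU; apply: hw.
rewrite ltn_neqAle; apply/andP; split; first by rewrite -(inj_eq val_inj) in ji.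
rewrite leqNgt; apply/negP => /hup; by apply/eqP.
Qed.

Lemma LT_actX A : LT A (\prod_i h i i ^+ A i) (act h 'X_[A]).
Proof.
rewrite actX [in LT A](multinomUE_id A).
exact: LT_prod (fun i => LTX _ (LT_lin i)).
Qed.

Lemma coef_actX A D : (act h 'X_[A])@_D != 0 -> D = A \/ mwt w A < mwt w D.
Proof.
case: (LT_actX A) => e [-> he]; rewrite mcoeffD mcoeffZ mcoeffX.
have [->|AD] := eqVneq A D; first by left.
rewrite mulr0 add0r -mcoeff_msupp => /he; by right.
Qed.

Lemma coef_actX_diag A : (act h 'X_[A])@_A = \prod_i h i i ^+ A i.
Proof.
case: (LT_actX A) => e [-> he]; rewrite mcoeffD mcoeffZ mcoeffX eqxx mulr1.
suff -> : e@_A = 0 by rewrite addr0.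
apply/eqP; rewrite mcoeff_eq0; apply/negP => /he; by rewrite ltxx.
Qed.

End Weight.


Section Det.
Variables (K : fieldType) (n m r : nat) (w : 'I_n.+1 -> int) (h : 'M[K]_n.+1).
Hypothesis hw : forall i j : 'I_n.+1, (i < j)%N -> w j < w i.
Hypothesis hup : forall i j : 'I_n.+1, (j < i)%N -> h i j = 0.

Definition Mx (S C : state n m r) (i j : 'I_r) :=
  (act h 'X_[mnm_of (st_mon S i)])@_(mnm_of (st_mon C j)).

Definition ch (S C : state n m r) :=
  wedge m (fun i => act h 'X_[mnm_of (st_mon S i)]) C.

Lemma term_nz {S C : state n m r} {s : 'S_r} :
  \prod_i Mx S C i (s i) != 0 ->
  (forall i, mwt w (mnm_of (st_mon S i)) <= mwt w (mnm_of (st_mon C (s i)))) /\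
  (swt w S = swt w C -> forall i, st_mon C (s i) = st_mon S i).
Proof.
move=> Hp.
have Hi : forall i, Mx S C i (s i) != 0.
  move=> i; apply: contra Hp => Hz; apply/prodf_eq0; by exists i.
have Hc := fun i => @coef_actX K n w h hw hup _ _ (Hi i).
have Hle : forall i, mwt w (mnm_of (st_mon S i)) <= mwt w (mnm_of (st_mon C (s i))).
  by move=> i; case: (Hc i) => [->|/ltW].
split=> // Esw i.
have Esum : \sum_i (mwt w (mnm_of (st_mon C (s i))) - mwt w (mnm_of (st_mon S i))) = 0.
  have E1 : \sum_i mwt w (mnm_of (st_mon C (s i))) = swt w C.
    by rewrite swt_est [RHS](reindex_inj (@perm_inj _ s)).
  by rewrite sumrB E1 -swt_est Esw subrr.
have Hge : forall j : 'I_r, true ->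
    0 <= mwt w (mnm_of (st_mon C (s j))) - mwt w (mnm_of (st_mon S j)).
  by move=> j _; rewrite subr_ge0.
have := psumr_eq0P Hge Esum (i := i) isT.
move/eqP; rewrite subr_eq0 => /eqP Ew.
apply: mnm_of_inj; case: (Hc i) => // Hlt.
by move: Hlt; rewrite Ew ltxx.
Qed.

Lemma term_ex {S C : state n m r} : ch S C != 0 ->
  exists s : 'S_r, \prod_i Mx S C i (s i) != 0.
Proof.
rewrite /ch /wedge /determinant => H.
case: (boolP [exists s : 'S_r, \prod_i Mx S C i (s i) != 0]).
  by move/existsP.
move/existsPn => Hn; exfalso; move: H; rewrite big1 ?eqxx // => s _.
move: (Hn s); rewrite negbK => /eqP Hz.
rewrite (eq_bigr (fun i => Mx S C i (s i))) ?Hz ?mulr0 //.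
by move=> i _; rewrite mxE.
Qed.

Lemma ch_weight (S C : state n m r) : ch S C != 0 ->
  swt w S <= swt w C /\ (swt w S = swt w C -> S = C).
Proof.
move=> /term_ex [s Hs]; have [Hle Heq] := term_nz Hs.
split.
  rewrite !swt_est [X in _ <= X](reindex_inj (@perm_inj _ s)) /=.
  by apply: ler_sum => i _; apply: Hle.
move=> Esw; have E := Heq Esw.
apply: val_inj; apply/eqP; rewrite eqEcard.
rewrite (eqP (valP S)) (eqP (valP C)) leqnn andbT.
apply/subsetP => x /est_surj [i <-].
change (st_mon S i \in val C); rewrite -E; exact: est_in.
Qed.

Hypothesis hd : forall i, h i i != 0.

Lemma ch_diag (C : state n m r) : ch C C != 0.
Proof.
rewrite /ch /wedge /determinant (bigD1 1%g) //= [X in _ + X]big1 ?addr0.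
  rewrite odd_perm1 expr0 mul1r; apply/negP => /prodf_eq0 [i _].
  rewrite mxE perm1 (@coef_actX_diag K n w h hw hup) => /prodf_eq0 [k _].
  by rewrite expf_eq0 (negbTE (hd k)) andbF.
move=> s s1.
case: (eqVneq (\prod_i Mx C C i (s i)) 0) => [Hz|Hnz].
  rewrite (eq_bigr (fun i => Mx C C i (s i))) ?Hz ?mulr0 //.
  by move=> i _; rewrite mxE.
exfalso; move/eqP: s1; apply; apply/permP => i.
have [_ E] := term_nz Hnz.
by rewrite perm1; apply: (@est_inj _ _ C); apply: E.
Qed.

End Det.


Lemma natr_inj0 (K : fieldType) : [pchar K] =i pred0 ->
  forall i j : nat, (i%:R : K) = j%:R -> i = j.
Proof.
move=> K0 i j; have P := (pcharf0P K).1 K0.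
wlog le : i j / (i <= j)%N.
  move=> H E; case/orP: (leq_total i j) => [/H|/H ij]; [exact | by rewrite ij].
move=> E; apply/eqP; rewrite eqn_leq le /=.
have : ((j - i)%N%:R : K) == 0 by rewrite natrB // E subrr.
by rewrite P subn_eq0.
Qed.

Lemma poly_zero_nz (K : fieldType) (p : {poly K}) : [pchar K] =i pred0 ->
  (forall t, t != 0 -> p.[t] = 0) -> p = 0.
Proof.
move=> K0 Hp; apply/eqP; apply: contraT => pnz.
pose rs := [seq (i.+1)%:R : K | i <- iota 0 (size p)].
have := max_poly_roots pnz (rs := rs).
rewrite size_map size_iota ltnn; apply.
  apply/allP => x /mapP [i _ ->]; apply/eqP; apply: Hp.
  by rewrite ((pcharf0P K).1 K0).
rewrite map_inj_uniq ?iota_uniq //.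
by move=> i j /(@natr_inj0 K K0) [].
Qed.

Section Main.
Variables (K : closedFieldType) (n m r : nat).
Hypothesis Kchar0 : [pchar K] =i pred0.
Variables (f : 'I_r -> {mpoly K[n.+1]}).
Hypothesis hf : forall i, f i \is m.-homog.
Variable (w : 'I_n.+1 -> int).
Hypothesis hw : forall i j : 'I_n.+1, (i < j)%N -> w j < w i.
Variable (h : 'M[K]_n.+1).
Hypothesis hh : h \in unitmx.
Hypothesis hup : forall i j : 'I_n.+1, (j < i)%N -> h i j = 0.
Variable (g : 'M[K]_n.+1).
Hypothesis hg : inU m f g.
Variable (N : int).
Implicit Types (S C : state n m r).

Lemma hd : forall i, h i i != 0.
Proof.
move: hh; rewrite unitmxE unitfE -det_tr det_trig; last first.
  by apply/is_trig_mxP => i j ij; rewrite mxE; apply: hup.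
by move=> /prodf_eq0 H i; apply/negP => /eqP hz; apply: H; exists i => //; rewrite mxE hz.
Qed.

Definition G : ext K n m r := wedge m (fun i => act g (f i)).
Definition E : int := \sum_(S : state n m r) (`|swt w S|%N : int).
Definition ex (S : state n m r) : nat := `|E - swt w S|%N.

Lemma swt_le S : swt w S <= E.
Proof.
rewrite /E (bigD1 S) //= -[X in X <= _]addr0; apply: lerD; first exact: lez_abs.
by apply: sumr_ge0.
Qed.

Lemma exE S : (ex S : int) = E - swt w S.
Proof. by rewrite /ex gez0_abs // subr_ge0 swt_le. Qed.

Lemma ex_eq S S' : (ex S == ex S') = (swt w S == swt w S').
Proof.
apply/eqP/eqP => [H|H]; last by rewrite /ex H.
have := congr1 (fun x : nat => (x : int)) H; rewrite !exE.
by move=> /addrI /oppr_inj.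
Qed.

Definition chh := @ch K n m r h.

Definition Pol (C : state n m r) : {poly K} :=
  \sum_(S : state n m r) (if N <= swt w S then G S * chh S C else 0) *: 'X^(ex S).
Definition Full (C : state n m r) : {poly K} :=
  \sum_(S : state n m r) (G S * chh S C) *: 'X^(ex S).

Lemma tpow (t : K) S : t != 0 -> t ^ (- E) * t ^+ ex S = t ^ (- swt w S).
Proof.
move=> t0; have -> : t ^+ ex S = t ^ (ex S : int) by [].
by rewrite -expfzDr // exE addrA addNr add0r.
Qed.

Lemma FF (t : K) S : t != 0 ->
  wedge m (fun i => act (lam w t) (act g (f i))) S = t ^ (- swt w S) * G S.
Proof. by move=> t0; rewrite wedge_lam. Qed.

Lemma coef_trunc (t : K) C : t != 0 ->
  act_ext h (trunc w N (wedge m (fun i => act (lam w t) (act g (f i))))) C =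
  t ^ (- E) * (Pol C).[t].
Proof.
move=> t0; rewrite /act_ext /Pol horner_sum mulr_sumr; apply: eq_bigr => S _.
rewrite hornerZ hornerXn /trunc; case: ifP => _; last by rewrite !mul0r mulr0.
rewrite (FF _ S t0) -(tpow _ S t0) /chh /ch -!mulrA; congr (_ * _); by rewrite [LHS]mulrC -mulrA.
Qed.

Lemma coef_full (t : K) C : t != 0 ->
  t ^ (- E) * (Full C).[t] =
  (coefpoly m f C).@[fun k => mxvec (h *m (lam w t *m g)) 0 k].
Proof.
move=> t0; rewrite wedge_eval.
have -> : wedge m (fun i => act (h *m (lam w t *m g)) (f i)) C =
    wedge m (fun i => act h (act (lam w t) (act g (f i)))) C.
  rewrite /wedge. congr (\det _). apply/matrixP => i j. rewrite !mxE. rewrite !act_comp.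
  by rewrite mulmxA.
rewrite -(@wedge_act K n m r h (fun i => act (lam w t) (act g (f i))) C); last first.
  by move=> i; apply: act_homog; apply: act_homog; apply: hf.
rewrite /act_ext /Full horner_sum mulr_sumr; apply: eq_bigr => S _.
rewrite hornerZ hornerXn (FF _ S t0) -(tpow _ S t0) /chh /ch -!mulrA; congr (_ * _).
by rewrite [RHS]mulrC -mulrA.
Qed.

Lemma coef_Pol C j : (Pol C)`_j =
  \sum_S (if N <= swt w S then G S * chh S C else 0) * (j == ex S)%:R.
Proof. by rewrite /Pol coef_sum; apply: eq_bigr => S _; rewrite coefZ coefXn. Qed.

Lemma coef_Full C j : (Full C)`_j = \sum_S (G S * chh S C) * (j == ex S)%:R.
Proof. by rewrite /Full coef_sum; apply: eq_bigr => S _; rewrite coefZ coefXn. Qed.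

Lemma Pol_good C : N <= swt w C -> G C != 0 -> Pol C != 0.
Proof.
move=> HN GC; apply/eqP => H0.
have := congr1 (fun p : {poly K} => p`_(ex C)) H0.
rewrite coef0 coef_Pol (bigD1 C) //= big1.
  rewrite eqxx mulr1 addr0 HN /chh. move=> /eqP. apply/negP.
  apply: mulf_neq0; [exact: GC | exact: (@ch_diag K n m r w h hw hup hd C)].
move=> S SC; case: ifP => HS; last by rewrite mul0r.
case: (eqVneq (ex C) (ex S)) => e; last by rewrite mulr0.
have Esw : swt w S = swt w C by apply/eqP; rewrite -ex_eq e.
suff -> : chh S C = 0 by rewrite mulr0 mul0r.
apply/eqP; apply: contraT => Hnz.
have [_ Eq] := @ch_weight K n m r w h hw hup S C Hnz.
by move: SC; rewrite (Eq Esw) eqxx.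
Qed.

Lemma Pol_low C : swt w C < N -> Pol C = 0.
Proof.
move=> HC; rewrite /Pol big1 // => S _; case: ifP => HN; last by rewrite scale0r.
suff -> : chh S C = 0 by rewrite mulr0 scale0r.
apply/eqP; apply: contraT => Hnz.
have [Hle _] := @ch_weight K n m r w h hw hup S C Hnz.
have := lt_le_trans (le_lt_trans Hle HC) HN; by rewrite ltxx.
Qed.

Lemma Full0 C : G C = 0 -> Full C = 0.
Proof.
move=> GC.
have Hc : coefpoly m f C = 0.
  apply/eqP; apply: contraT => Hnz; have := hg.2 C Hnz.
  by rewrite wedge_eval -/(G C) GC eqxx.
apply: (@poly_zero_nz K _ Kchar0) => t t0.
have := coef_full t C t0; rewrite Hc raddf0 => /eqP.
by rewrite mulf_eq0 (negbTE (expfz_neq0 _ t0)) orFb => /eqP.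
Qed.

Lemma Pol_high C : G C = 0 -> Pol C = 0.
Proof.
move=> GC; apply/polyP => j; rewrite coef0 coef_Pol.
have Hf : (Full C)`_j = 0 by rewrite (Full0 C GC) coef0.
rewrite coef_Full in Hf.
case: (boolP (N <= E - (j : int))) => HN.
  rewrite -[RHS]Hf; apply: eq_big => // S _.
  case: (eqVneq j (ex S)) => e; last by rewrite !mulr0.
  have -> : swt w S = E - (j : int) by rewrite e exE opprB addrC subrK.
  by rewrite HN.
rewrite big1 // => S _.
case: (eqVneq j (ex S)) => e; last by rewrite mulr0.
have -> : swt w S = E - (j : int) by rewrite e exE opprB addrC subrK.
by rewrite (negbTE HN) mul0r.
Qed.

Lemma main_sec : exists s : seq K, forall t : K, t != 0 -> t \notin s ->
    let F := wedge m (fun i => act (lam w t) (act g (f i))) in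
    supp (act_ext h (trunc w N F)) = supp (trunc w N F).
Proof.
pose good C := (N <= swt w C) && (G C != 0).
pose Q := \prod_(C | good C) Pol C.
have Qnz : Q != 0.
  apply/negP => /prodf_eq0 [C /andP[h1 h2]]; apply/negP; exact: Pol_good h1 h2.
have [rs Ers] := closed_field_poly_normal Q.
exists rs => t t0 trs F.
apply/setP => C; rewrite !inE /F coef_trunc // mulf_eq0 (negbTE (expfz_neq0 _ t0)) orFb.
rewrite /trunc; case: ifP => HN; last first.
  by rewrite Pol_low ?horner0 ?eqxx // ltNge HN.
rewrite (FF _ C t0) mulf_eq0 (negbTE (expfz_neq0 _ t0)) orFb.
case: (eqVneq (G C) 0) => GC; first by rewrite Pol_high // horner0 eqxx.
have Qt : Q.[t] != 0.
  rewrite Ers hornerZ mulf_neq0 ?lead_coef_eq0 // horner_prod prodf_seq_neq0.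
  apply/allP => z zin; rewrite hornerXsubC subr_eq0.
  by apply: contraNneq trs => ->.
apply: contra Qt => /eqP Hz; rewrite /Q horner_prod; apply/prodf_eq0.
by exists C; [rewrite /good HN GC | rewrite Hz].
Qed.

End Main.

Theorem mainTheorem9 (K : closedFieldType) (n m r : nat)
  (Kchar0 : [pchar K] =i pred0)
  (f : 'I_r -> {mpoly K[n.+1]}) (hf : forall i, f i \is m.-homog)
  (w : 'I_n.+1 -> int)
  (hw : forall i j : 'I_n.+1, (i < j)%N -> w j < w i)
  (hdist : distinguishes w (r * m)%N)
  (h : 'M[K]_n.+1) (hh : h \in unitmx)
  (hup : forall i j : 'I_n.+1, (j < i)%N -> h i j = 0)
  (g : 'M[K]_n.+1) (hg : inU m f g) (N : int) :
  exists s : seq K, forall t : K, t != 0 -> t \notin s ->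
    let F := wedge m (fun i => act (lam w t) (act g (f i))) in
    supp (act_ext h (trunc w N F)) = supp (trunc w N F).
Proof. exact: (@main_sec K n m r Kchar0 f hf w hw h hh hup g hg N). Qed.
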